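(* Let $0<q<1$, let $r\ge1$, $s\ge1$ be integers with $r-1\le s$, and $\alpha\in\mathbb{R}\setminus\mathbb{Z}_-$. Let $a_j>0$ real and $b_j\in\mathbb{C}$ ($j=1,\dots,r-1$), and $c_\ell>0$ real and $d_\ell\in\mathbb{C}$ ($\ell=1,\dots,s-1$), with $a_jn+\mathrm{Re}(b_j)\notin\mathbb{Z}_-$ and $c_\ell n+\mathrm{Re}(d_\ell)\notin\mathbb{Z}_-$ for all positive integers $n$ (when $r=1$ there are no $a_j,b_j$; when $s=1$ there are no $c_\ell,d_\ell$). Then for every $z\in\mathbb{C}$, $$\lim_{n\to+\infty}{}_r\phi_s\!\left(\begin{array}{c}q^{-n},q^{a_1n+b_1},\dots,q^{a_{r-1}n+b_{r-1}}\\ q^{\alpha},q^{c_1n+d_1},\dots,q^{c_{s-1}n+d_{s-1}}\end{array};q,q^nz\right)=\sum_{k=0}^{\infty}\frac{(-1)^{(r-s)k}q^{(2+s-r)\binom k2}}{(q^{\alpha};q)_k(q;q)_k}z^k.$$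
   Context: $\mathbb{Z}_-=\{0,-1,-2,\dots\}$. For $w\in\mathbb{C}$, $q^{w}:=e^{w\ln q}$. For $a\in\mathbb{C}$: $(a;q)_0=1$, $(a;q)_k=\prod_{j=0}^{k-1}(1-aq^{j})$, and $(a_1,\dots,a_r;q)_k=\prod_{i=1}^r(a_i;q)_k$. The basic hypergeometric series is $${}_r\phi_s\!\left(\begin{array}{c}a_1,\dots,a_r\\ b_1,\dots,b_s\end{array};q,z\right)=\sum_{k=0}^{\infty}\frac{(a_1,\dots,a_r;q)_k}{(b_1,\dots,b_s;q)_k}(-1)^{(1+s-r)k}q^{(1+s-r)\binom{k}{2}}\frac{z^k}{(q;q)_k};$$ when one numerator parameter is $q^{-n}$ it is a polynomial in $z$ of degree at most $n$. *)

(* Defs.v *)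
From Stdlib Require Import Reals.
From Coquelicot Require Import Coquelicot.
Open Scope R_scope.

(* q^w := exp(w ln q) for complex w, written out: exp(Re w ln q)(cos(Im w ln q) + i sin(Im w ln q)) *)
Definition qpow (q : R) (w : C) : C :=
  (exp (Re w * ln q) * cos (Im w * ln q), exp (Re w * ln q) * sin (Im w * ln q)).

Fixpoint cpow (x : C) (k : nat) : C :=
  match k with O => RtoC 1 | S k' => Cmult (cpow x k') x end.

Fixpoint qpoch (q : R) (a : C) (k : nat) : C :=
  match k with
  | O => RtoC 1
  | S k' => Cmult (qpoch q a k') (Cminus (RtoC 1) (Cmult a (RtoC (q ^ k'))))
  end.

Fixpoint cprod (f : nat -> C) (m : nat) : C :=
  match m with O => RtoC 1 | S m' => Cmult (cprod f m') (f m') end.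

Fixpoint csum (f : nat -> C) (N : nat) : C :=
  match N with O => f O | S N' => Cplus (csum f N') (f N) end.

Definition binom2 (k : nat) : nat := (k * (k - 1) / 2)%nat.

(* k-th term of r phi s with numerator params A 0..A (r-1), denominator params
   B 0..B (s-1) (given as functions, only the first r resp. s values used). *)
Definition phi_term (q : R) (r s : nat) (A B : nat -> C) (z : C) (k : nat) : C :=
  Cmult
    (Cdiv (cprod (fun i => qpoch q (A i) k) r)
          (Cmult (cprod (fun i => qpoch q (B i) k) s) (qpoch q (RtoC q) k)))
    (Cmult (RtoC (powerRZ (-1) ((1 + Z.of_nat s - Z.of_nat r) * Z.of_nat k)%Z
                  * powerRZ q ((1 + Z.of_nat s - Z.of_nat r) * Z.of_nat (binom2 k))%Z))
           (cpow z k)).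

(* Terminating series: when one numerator parameter is q^{-N}, all terms with
   k > N vanish, so r phi s equals the finite sum of its terms for k = 0..N. *)
Definition phi_terminating (q : R) (r s : nat) (A B : nat -> C) (z : C) (N : nat) : C :=
  csum (phi_term q r s A B z) N.

Definition Zm_ (x : R) : Prop := exists m : nat, x = - INR m.

Definition limit_term (q : R) (r s : nat) (alpha : R) (z : C) (k : nat) : C :=
  Cmult
    (Cdiv (RtoC (powerRZ (-1) ((Z.of_nat r - Z.of_nat s) * Z.of_nat k)%Z
                 * powerRZ q ((2 + Z.of_nat s - Z.of_nat r) * Z.of_nat (binom2 k))%Z))
          (Cmult (qpoch q (qpow q (RtoC alpha)) k) (qpoch q (RtoC q) k)))
    (cpow z k).

(* Main.v *)
Require Import Defs.
From Stdlib Require Import Reals Lra Lia.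
From Coquelicot Require Import Coquelicot.
Open Scope R_scope.


Definition conv (x : nat -> C) (l : C) := is_lim_seq (fun n => Cmod (x n - l)) 0.

Lemma Cmod_sub_sym (a b : C) : Cmod (a - b) = Cmod (b - a).
Proof. rewrite <- Cmod_opp. f_equal. ring. Qed.

Lemma conv_eps x l : conv x l -> forall eps, 0 < eps ->
  exists N, forall n, (N <= n)%nat -> Cmod (x n - l) < eps.
Proof.
  intros H eps He. apply is_lim_seq_spec in H.
  destruct (H (mkposreal eps He)) as [N HN]. exists N. intros n Hn.
  specialize (HN n Hn). simpl in HN. rewrite Rminus_0_r, Rabs_pos_eq in HN by apply Cmod_ge_0. exact HN.
Qed.

Lemma eps_conv x l : (forall eps, 0 < eps ->
  exists N, forall n, (N <= n)%nat -> Cmod (x n - l) < eps) -> conv x l.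
Proof.
  intros H. apply is_lim_seq_spec. intros eps. destruct (H eps (cond_pos eps)) as [N HN].
  exists N. intros n Hn. rewrite Rminus_0_r, Rabs_pos_eq by apply Cmod_ge_0. auto.
Qed.

Lemma conv_locally x l : conv x l -> filterlim x eventually (locally l).
Proof.
  intros H. apply filterlim_locally. intros eps.
  destruct (conv_eps x l H eps (cond_pos eps)) as [N HN]. exists N. intros n Hn.
  apply C_NormedModule_mixin_compat1. apply HN; auto.
Qed.

Lemma locally_conv x l : filterlim x eventually (locally l) -> conv x l.
Proof.
  intros H. apply eps_conv. intros eps He.
  assert (Hp : 0 < eps / sqrt 2).
  { apply Rdiv_lt_0_compat; auto. apply sqrt_lt_R0; lra. }
  destruct (proj1 (filterlim_locally x l) H (mkposreal _ Hp)) as [N HN].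
  exists N. intros n Hn. specialize (HN n Hn).
  apply C_NormedModule_mixin_compat2 in HN. simpl in HN.
  replace eps with (sqrt 2 * (eps / sqrt 2)). exact HN.
  field. apply Rgt_not_eq, sqrt_lt_R0; lra.
Qed.

Lemma conv_bound x l m : conv x l ->
  (exists N, forall n, (N <= n)%nat -> Cmod (x n) <= m) -> Cmod l <= m.
Proof.
  intros H [N HN]. destruct (Rle_or_lt (Cmod l) m) as [h|h]; auto.
  destruct (conv_eps x l H (Cmod l - m)) as [N2 HN2]; [lra|].
  specialize (HN (max N N2) (Nat.le_max_l _ _)).
  specialize (HN2 (max N N2) (Nat.le_max_r _ _)).
  assert (Cmod l <= Cmod (x (max N N2)) + Cmod (l - x (max N N2))).
  { replace l with (x (max N N2) + (l - x (max N N2)))%C at 1 by ring. apply Cmod_triangle. }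
  rewrite Cmod_sub_sym in H0. lra.
Qed.

Lemma conv_mult x y l m : conv x l -> conv y m -> conv (fun n => x n * y n)%C (l * m)%C.
Proof.
  intros Hx Hy. unfold conv.
  apply is_lim_seq_le_le with (u := fun _ => 0)
    (w := fun n => (Cmod (x n - l) + Cmod l) * Cmod (y n - m) + Cmod m * Cmod (x n - l)).
  - intros n. split. apply Cmod_ge_0.
    replace (x n * y n - l * m)%C with (x n * (y n - m) + m * (x n - l))%C by ring.
    eapply Rle_trans. apply Cmod_triangle. rewrite !Cmod_mult.
    apply Rplus_le_compat_r. apply Rmult_le_compat_r. apply Cmod_ge_0.
    replace (x n) with ((x n - l) + l)%C at 1 by ring. apply Cmod_triangle.
  - apply is_lim_seq_const.
  - replace 0 with ((0 + Cmod l) * 0 + Cmod m * 0) by ring.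
    apply is_lim_seq_plus'. apply is_lim_seq_mult'. apply is_lim_seq_plus'. exact Hx.
    apply is_lim_seq_const. exact Hy. apply is_lim_seq_mult'. apply is_lim_seq_const. exact Hx.
Qed.

Lemma conv_const c : conv (fun _ => c) c.
Proof. unfold conv. eapply is_lim_seq_ext. 2: apply is_lim_seq_const.
 intros n. simpl. replace (c - c)%C with (RtoC 0) by ring. rewrite Cmod_0. auto. Qed.

Lemma conv_ext x y l : (forall n, x n = y n) -> conv x l -> conv y l.
Proof. intros H. unfold conv. apply is_lim_seq_ext. intros n; rewrite H; auto. Qed.

Lemma Cmod_sum (a : nat -> C) n m : Cmod (sum_n_m a n m) <= sum_n_m (fun k => Cmod (a k)) n m.
Proof. exact (norm_sum_n_m (V:=C_NormedModule) a n m). Qed.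

Lemma sum_le_loc (a b : nat -> R) n m : (forall k, (n <= k <= m)%nat -> a k <= b k) ->
  sum_n_m a n m <= sum_n_m b n m.
Proof.
  induction m; intros H.
  - destruct n. rewrite !sum_n_n. apply H; lia.
    rewrite !sum_n_m_zero by lia. lra.
  - destruct (Compare_dec.le_lt_dec n (S m)).
    + destruct (Nat.eq_dec n (S m)). subst. rewrite !sum_n_n. apply H; lia.
      rewrite !sum_n_Sm by lia. change plus with Rplus. apply Rplus_le_compat.
      apply IHm. intros; apply H; lia. apply H; lia.
    + rewrite !sum_n_m_zero by lia. lra.
Qed.

Lemma finite_part (f : nat -> nat -> C) (g : nat -> C) :
  (forall k, conv (fun n => f n k) (g k)) ->
  forall K eps, 0 < eps -> exists N, forall n, (N <= n)%nat ->
    sum_n_m (fun k => Cmod (f n k - g k)) 0 K < eps.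
Proof.
  intros H. induction K; intros eps He.
  - destruct (conv_eps _ _ (H 0%nat) eps He) as [N HN]. exists N. intros n Hn.
    rewrite sum_n_n. apply HN; auto.
  - destruct (IHK (eps/2)) as [N1 H1]. lra.
    destruct (conv_eps _ _ (H (S K)) (eps/2)) as [N2 H2]. lra.
    exists (max N1 N2). intros n Hn. rewrite sum_n_Sm by lia.
    specialize (H1 n ltac:(lia)). specialize (H2 n ltac:(lia)).
    change plus with Rplus. lra.
Qed.

Lemma tannery (f : nat -> nat -> C) (g : nat -> C) (M : nat -> R) (N0 : nat) :
 (forall k, conv (fun n => f n k) (g k)) ->
 (forall n k, (N0 <= n)%nat -> (k <= n)%nat -> Cmod (f n k) <= M k) ->
 ex_series M ->
 exists L, is_series g L /\ conv (fun n => sum_n (f n) n) L.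
Proof.
  intros Hc Hb HM.
  assert (Hg : forall k, Cmod (g k) <= M k).
  { intros k. apply (conv_bound (fun n => f n k)); auto. exists (max N0 k). intros n Hn.
    apply Hb; lia. }
  assert (Hex : ex_series g).
  { apply (ex_series_le (V := C_CompleteNormedModule) g M); auto. }
  destruct Hex as [L HL]. exists L. split; auto.
  apply locally_conv in HL.
  apply (Cauchy_ex_series (V:=R_CompleteNormedModule)) in HM.
  apply eps_conv. intros eps He.
  destruct (HM (mkposreal (eps/4) ltac:(lra))) as [K HK]. simpl in HK.
  destruct (finite_part f g Hc K (eps/4)) as [N1 H1]. lra.
  destruct (conv_eps _ _ HL (eps/4)) as [N2 H2]. lra.
  exists (max N0 (max N1 (max N2 (S K)))). intros n Hn.
  specialize (H1 n ltac:(lia)). specialize (H2 n ltac:(lia)).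
  assert (HK' := HK (S K) n ltac:(lia) ltac:(lia)).
  assert (E1 : sum_n (f n) n = (sum_n_m (fun k => f n k - g k)%C 0 K
                 + sum_n_m (fun k => f n k - g k)%C (S K) n + sum_n g n)%C).
  { unfold sum_n.
    transitivity (sum_n_m (fun k => plus (f n k - g k)%C (g k)) 0 n).
    apply sum_n_m_ext. intros k. change (f n k = ((f n k - g k) + g k)%C). ring.
    rewrite sum_n_m_plus. rewrite (sum_n_m_Chasles _ 0 K n) by lia.
    reflexivity. }
  rewrite E1.
  replace (sum_n_m (fun k : nat => (f n k - g k)%C) 0 K +
     sum_n_m (fun k : nat => (f n k - g k)%C) (S K) n + sum_n g n - L)%C
   with (sum_n_m (fun k : nat => (f n k - g k)%C) 0 K +
     sum_n_m (fun k : nat => (f n k - g k)%C) (S K) n + (sum_n g n - L))%C by ring.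
  eapply Rle_lt_trans. apply Cmod_triangle.
  eapply Rle_lt_trans. apply Rplus_le_compat_r. apply Cmod_triangle.
  assert (A1 : Cmod (sum_n_m (fun k : nat => (f n k - g k)%C) 0 K)
     <= sum_n_m (fun k => Cmod (f n k - g k)) 0 K) by apply Cmod_sum.
  assert (A2 : Cmod (sum_n_m (fun k : nat => (f n k - g k)%C) (S K) n)
     <= sum_n_m (fun k => M k + M k) (S K) n).
  { eapply Rle_trans. apply Cmod_sum.
    apply sum_le_loc. intros k Hk.
    replace (f n k - g k)%C with (f n k + - g k)%C by ring.
    eapply Rle_trans. apply Cmod_triangle. rewrite Cmod_opp.
    apply Rplus_le_compat; auto. apply Hb; lia. }
  assert (E2: sum_n_m (fun k => M k + M k) (S K) n = sum_n_m M (S K) n + sum_n_m M (S K) n)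
    by apply (sum_n_m_plus (G:=R_AbelianMonoid) M M).
  rewrite E2 in A2.
  assert (HK2 : sum_n_m M (S K) n < eps/4).
  { eapply Rle_lt_trans. 2: exact HK'. apply Rle_abs. }
  apply Rle_lt_trans with (sum_n_m (fun k => Cmod (f n k - g k)) 0 K + (sum_n_m M (S K) n + sum_n_m M (S K) n) + Cmod (sum_n g n - L)).
  apply Rplus_le_compat_r. apply Rplus_le_compat; [exact A1| exact A2]. pose proof (Rplus_lt_compat _ _ _ _ (Rplus_lt_compat _ _ _ _ H1 (Rplus_lt_compat _ _ _ _ HK2 HK2)) H2) as HH.
  eapply Rlt_le_trans; [exact HH| lra].
Qed.

Lemma Cinv_0 : Cinv (RtoC 0) = RtoC 0.
Proof. unfold Cinv, RtoC. simpl. f_equal; unfold Rdiv; ring. Qed.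

Lemma Cinv_mult' (x y : C) : Cinv (x * y) = (Cinv x * Cinv y)%C.
Proof.
  destruct (Ceq_dec x 0) as [->|hx].
  - rewrite Cmult_0_l, Cinv_0. ring.
  - destruct (Ceq_dec y 0) as [->|hy].
    + rewrite Cmult_0_r, Cinv_0. ring.
    + field. split; auto.
Qed.

Lemma Cmod_inv' (x : C) : Cmod (Cinv x) = / Cmod x.
Proof.
  destruct (Ceq_dec x 0) as [->|hx].
  - rewrite Cinv_0, Cmod_0, Rinv_0. auto.
  - apply Cmod_inv; auto.
Qed.

Lemma Rinv_nonneg (x : R) : 0 <= x -> 0 <= / x.
Proof. intros [h| <-]. left; apply Rinv_0_lt_compat; auto. rewrite Rinv_0; lra. Qed.

Lemma cpow_mult (a b : C) k : cpow (a * b) k = (cpow a k * cpow b k)%C.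
Proof. induction k; simpl. ring. rewrite IHk. ring. Qed.

Lemma cpow_RtoC (t : R) k : cpow (RtoC t) k = RtoC (t ^ k).
Proof. induction k; simpl. auto. rewrite IHk, RtoC_mult. ring. Qed.

Lemma Cmod_cpow (a : C) k : Cmod (cpow a k) = Cmod a ^ k.
Proof. induction k; simpl. apply Cmod_1. rewrite Cmod_mult, IHk. ring. Qed.

Lemma cprod_shift (f : nat -> C) m : cprod f (S m) = (f O * cprod (fun i => f (S i)) m)%C.
Proof. induction m. simpl. ring. change (cprod f (S (S m))) with (cprod f (S m) * f (S m))%C.
  rewrite IHm. simpl. ring. Qed.

Lemma csum_sum_n (f : nat -> C) N : csum f N = sum_n f N.
Proof. induction N. simpl. rewrite sum_O. auto. simpl. rewrite sum_Sn, IHN. auto. Qed.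

Lemma qpow_real q t : qpow q (RtoC t) = RtoC (exp (t * ln q)).
Proof. unfold qpow, RtoC. simpl. rewrite Rmult_0_l, cos_0, sin_0. f_equal; ring. Qed.

Lemma Cmod_qpow q w : Cmod (qpow q w) = exp (Re w * ln q).
Proof.
  unfold qpow, Cmod. simpl.
  set (e := exp (Re w * ln q)). set (t := Im w * ln q).
  replace (e * cos t * (e * cos t * 1) + e * sin t * (e * sin t * 1)) with (e ^ 2 * ((sin t)² + (cos t)²))
   by (unfold Rsqr; ring).
  rewrite sin2_cos2, Rmult_1_r. apply sqrt_pow2. left; apply exp_pos.
Qed.

Lemma exp_nat n x : exp (INR n * x) = exp x ^ n.
Proof. induction n. simpl. rewrite Rmult_0_l, exp_0. auto.
  rewrite S_INR. replace ((INR n + 1) * x) with (INR n * x + x) by ring.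
  rewrite exp_plus, IHn. simpl. ring. Qed.

Lemma qpow_negn q n : 0 < q -> qpow q (RtoC (- INR n)) = RtoC (/ q ^ n).
Proof. intros hq. rewrite qpow_real. f_equal.
  replace (- INR n * ln q) with (- (INR n * ln q)) by ring.
  rewrite exp_Ropp, exp_nat, exp_ln; auto. Qed.

Lemma pow_le1 q n : 0 <= q <= 1 -> q ^ n <= 1.
Proof. intros h. induction n; simpl. lra. rewrite <- (Rmult_1_r 1).
  apply Rmult_le_compat; try lra. apply pow_le; lra. Qed.

Lemma pow_le_mono q m n : 0 < q <= 1 -> (m <= n)%nat -> q ^ n <= q ^ m.
Proof. intros hq h. replace n with (m + (n - m))%nat by lia. rewrite pow_add.
  rewrite <- (Rmult_1_r (q ^ m)) at 2. apply Rmult_le_compat_l. apply pow_le; lra.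
  apply pow_le1; lra. Qed.

Lemma binom2_S k : binom2 (S k) = (binom2 k + k)%nat.
Proof. unfold binom2. replace (S k * (S k - 1))%nat with (k * (k - 1) + k * 2)%nat.
  rewrite Nat.div_add by lia. auto. destruct k; simpl; lia. Qed.

Lemma pm1_sq x : powerRZ (-1) x * powerRZ (-1) x = 1.
Proof. destruct x; simpl. ring. rewrite <- Rpow_mult_distr. replace (-1 * -1) with 1 by ring. apply pow1.
  rewrite <- Rinv_mult, <- Rpow_mult_distr. replace (-1 * -1) with 1 by ring. rewrite pow1. apply Rinv_1. Qed.

Lemma Cmod_xq x q k : 0 < q -> Cmod (x * RtoC (q ^ k)) = Cmod x * q ^ k.
Proof. intros hq. rewrite Cmod_mult, Cmod_R, Rabs_pos_eq; auto. apply pow_le; lra. Qed.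

Lemma geom_step q k : 0 < q < 1 -> (1 - q ^ S k) / (1 - q) = (1 - q ^ k) / (1 - q) + q ^ k.
Proof. intros hq. simpl. field. lra. Qed.

Lemma geom_le q k : 0 < q < 1 -> (1 - q ^ k) / (1 - q) <= / (1 - q).
Proof. intros hq. unfold Rdiv. rewrite <- (Rmult_1_l (/ (1 - q))) at 2.
  apply Rmult_le_compat_r. left; apply Rinv_0_lt_compat; lra.
  assert (0 <= q ^ k) by (apply pow_le; lra). lra. Qed.

Lemma exp_le_exp x y : x <= y -> exp x <= exp y.
Proof. intros [h|<-]. left; apply exp_increasing; auto. lra. Qed.

Lemma qpoch_upper q x k : 0 < q < 1 -> Cmod x <= 1 ->
  Cmod (qpoch q x k) <= exp ((1 - q ^ k) / (1 - q)).
Proof.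
  intros hq hx. induction k.
  - simpl. rewrite Cmod_1. replace ((1 - 1) / (1 - q)) with 0 by (field; lra). rewrite exp_0. lra.
  - simpl qpoch. rewrite Cmod_mult, geom_step, exp_plus by auto.
    apply Rmult_le_compat; try apply Cmod_ge_0; auto.
    eapply Rle_trans. unfold Cminus. apply Cmod_triangle. rewrite Cmod_opp, Cmod_1, Cmod_xq by lra.
    eapply Rle_trans. 2: apply exp_ineq1_le. apply Rplus_le_compat_l.
    rewrite <- (Rmult_1_l (q ^ k)) at 2. apply Rmult_le_compat_r; auto. apply pow_le; lra.
Qed.

Lemma qpoch_upperE q x k : 0 < q < 1 -> Cmod x <= 1 -> Cmod (qpoch q x k) <= exp (/ (1 - q)).
Proof. intros. eapply Rle_trans. apply qpoch_upper; auto. apply exp_le_exp, geom_le; auto. Qed.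

Lemma qpoch_lower q x k : 0 < q < 1 -> Cmod x <= / 2 ->
  0 < Cmod (qpoch q x k) /\ / Cmod (qpoch q x k) <= exp ((1 - q ^ k) / (1 - q)).
Proof.
  intros hq hx. induction k.
  - simpl. rewrite Cmod_1. replace ((1 - 1) / (1 - q)) with 0 by (field; lra). rewrite exp_0, Rinv_1. lra.
  - destruct IHk as [h1 h2].
    assert (hqk : 0 < q ^ k <= 1). split. apply pow_lt; lra. apply pow_le1; lra.
    assert (hB : 1 - q ^ k / 2 <= Cmod (1 - x * RtoC (q ^ k))).
    { assert (Cmod 1 <= Cmod (1 - x * RtoC (q ^ k)) + Cmod (x * RtoC (q ^ k))).
      { replace (RtoC 1) with ((1 - x * RtoC (q ^ k)) + x * RtoC (q ^ k))%C at 1 by ring.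
        apply Cmod_triangle. }
      rewrite Cmod_1, Cmod_xq in H by lra.
      assert (Cmod x * q ^ k <= q ^ k / 2). { assert (h := Rmult_le_compat_r (q^k) _ _ ltac:(lra) hx). lra. }
      lra. }
    simpl qpoch. rewrite Cmod_mult, geom_step, exp_plus by auto. split.
    + apply Rmult_lt_0_compat; auto. lra.
    + rewrite Rinv_mult. apply Rmult_le_compat; auto.
      left; apply Rinv_0_lt_compat; auto. left; apply Rinv_0_lt_compat; lra.
      eapply Rle_trans. 2: apply exp_ineq1_le.
      apply Rmult_le_reg_l with (Cmod (1 - x * RtoC (q ^ k))). lra.
      rewrite Rinv_r by lra.
      apply Rle_trans with ((1 - q ^ k / 2) * (1 + q ^ k)).
      nra. apply Rmult_le_compat_r; lra.
Qed.

Lemma qpoch_lowerE q x k : 0 < q < 1 -> Cmod x <= / 2 ->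
  0 < Cmod (qpoch q x k) /\ / Cmod (qpoch q x k) <= exp (/ (1 - q)).
Proof. intros. destruct (qpoch_lower q x k) as [h1 h2]; auto. split; auto.
  eapply Rle_trans. apply h2. apply exp_le_exp, geom_le; auto. Qed.

Lemma qpoch_succ_l q x k : qpoch q x (S k) = ((1 - x) * qpoch q (x * RtoC q) k)%C.
Proof.
  induction k. simpl. ring.
  change (qpoch q x (S (S k))) with (qpoch q x (S k) * (1 - x * RtoC (q ^ S k)))%C.
  rewrite IHk. simpl. rewrite (RtoC_mult q (q ^ k)). ring.
Qed.

Lemma qpoch_inv_boundJ q J : 0 < q < 1 -> forall x, Cmod x * q ^ J <= / 2 ->
  exists B, forall k, / Cmod (qpoch q x k) <= B.
Proof.
  intros hq. induction J; intros x hx.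
  - exists (exp (/ (1 - q))). intros k. apply qpoch_lowerE; auto. simpl in hx; lra.
  - destruct (IHJ (x * RtoC q)%C) as [B HB].
    { rewrite Cmod_mult, Cmod_R, Rabs_pos_eq by lra. simpl in hx. lra. }
    exists (Rmax 1 (/ Cmod (1 - x) * B)). intros [|k].
    + simpl. rewrite Cmod_1, Rinv_1. apply Rmax_l.
    + rewrite qpoch_succ_l, Cmod_mult, Rinv_mult. eapply Rle_trans. 2: apply Rmax_r.
      apply Rmult_le_compat_l; auto. apply Rinv_nonneg, Cmod_ge_0.
Qed.

Lemma qpoch_inv_bound q x : 0 < q < 1 -> exists B, forall k, / Cmod (qpoch q x k) <= B.
Proof.
  intros hq. destruct (pow_lt_1_zero q ltac:(rewrite Rabs_pos_eq; lra) (/ (2 * (Cmod x + 1))))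
    as [J HJ].
  { apply Rinv_0_lt_compat. assert (0 <= Cmod x) by apply Cmod_ge_0. lra. }
  apply (qpoch_inv_boundJ q J hq). specialize (HJ J (le_n _)).
  rewrite Rabs_pos_eq in HJ by (apply pow_le; lra).
  assert (0 <= Cmod x) by apply Cmod_ge_0.
  assert (0 <= q ^ J) by (apply pow_le; lra).
  apply Rle_trans with ((Cmod x + 1) * q ^ J). nra.
  apply Rmult_lt_compat_l with (r := Cmod x + 1) in HJ; [|lra].
  rewrite Rinv_mult in HJ. replace ((Cmod x + 1) * (/ 2 * / (Cmod x + 1))) with (/2) in HJ
    by (field; lra). lra.
Qed.

Fixpoint Pn (q : R) (n k : nat) : R := match k with O => 1 | S k => Pn q n k * (q ^ n - q ^ k) end.
Fixpoint Qp (q : R) (k : nat) : R := match k with O => 1 | S k => Qp q k * (- q ^ k) end.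
Fixpoint rq (q x : R) (k : nat) : R := match k with O => 1 | S k => rq q x k * (1 - x * q ^ k) end.

Lemma qpoch_R q x k : qpoch q (RtoC x) k = RtoC (rq q x k).
Proof. induction k; simpl. auto. rewrite IHk. rewrite (RtoC_mult (rq q x k)), (RtoC_minus 1), (RtoC_mult x). auto. Qed.

Lemma Pn_id q n k : 0 < q -> (qpoch q (RtoC (/ q ^ n)) k * cpow (RtoC (q ^ n)) k)%C = RtoC (Pn q n k).
Proof.
  intros hq. rewrite qpoch_R, cpow_RtoC, <- RtoC_mult. f_equal.
  assert (q ^ n <> 0) by (apply pow_nonzero; lra).
  induction k; simpl. ring. rewrite <- IHk. field. auto.
Qed.

Lemma Pn_bound q n k : 0 < q < 1 -> (k <= n)%nat -> Rabs (Pn q n k) <= q ^ binom2 k.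
Proof.
  intros hq. induction k; intros hk.
  - simpl. rewrite Rabs_R1. unfold binom2. simpl. lra.
  - simpl Pn. rewrite Rabs_mult, binom2_S, pow_add.
    assert (h1 : q ^ n <= q ^ k) by (apply pow_le_mono; [lra|lia]).
    assert (h2 : 0 < q ^ n) by (apply pow_lt; lra).
    rewrite (Rabs_left1 (q ^ n - q ^ k)) by lra.
    apply Rmult_le_compat. apply Rabs_pos. lra. apply IHk; lia. lra.
Qed.

Lemma Qp_id q k : Qp q k = (-1) ^ k * q ^ binom2 k.
Proof. induction k. simpl. unfold binom2; simpl; ring.
  simpl Qp. rewrite IHk, binom2_S, pow_add. simpl. ring. Qed.

Lemma Pn_lim q k : 0 < q < 1 -> is_lim_seq (fun n => Pn q n k) (Qp q k).
Proof.
  intros hq. induction k.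
  - simpl. apply is_lim_seq_const.
  - simpl. replace (Qp q k * - q ^ k) with (Qp q k * (0 - q ^ k)) by ring.
    apply is_lim_seq_mult'; auto. apply is_lim_seq_minus'.
    apply is_lim_seq_geom. rewrite Rabs_pos_eq; lra. apply is_lim_seq_const.
Qed.

Lemma conv_R (u : nat -> R) (l : R) : is_lim_seq u l -> conv (fun n => RtoC (u n)) (RtoC l).
Proof.
  intros H. unfold conv. apply is_lim_seq_ext with (fun n => Rabs (u n - l)).
  intros n. rewrite <- RtoC_minus, Cmod_R. auto.
  replace (Finite 0) with (Rbar_abs (l - l)). apply is_lim_seq_abs.
  apply is_lim_seq_minus'; auto. apply is_lim_seq_const.
  simpl. f_equal. replace (l - l) with 0 by ring. apply Rabs_R0.
Qed.

Lemma conv_eq x l l' : l = l' -> conv x l -> conv x l'.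
Proof. intros ->; auto. Qed.

Lemma conv_sub1 y : conv y 0 -> conv (fun n => 1 - y n)%C 1.
Proof. unfold conv. apply is_lim_seq_ext. intros n.
  replace (y n - 0)%C with (- (1 - y n - 1))%C by ring. apply Cmod_opp. Qed.

Lemma qpoch_conv q (x : nat -> C) k : conv x 0 -> conv (fun n => qpoch q (x n) k) 1.
Proof.
  intros H. induction k.
  - simpl. apply conv_const.
  - simpl. apply conv_eq with (RtoC 1 * RtoC 1)%C. ring.
    apply conv_mult; auto. apply conv_sub1.
    apply conv_eq with (RtoC 0 * RtoC (q ^ k))%C. ring.
    apply conv_mult; auto. apply conv_const.
Qed.

Lemma cprod_conv q (X : nat -> nat -> C) k m :
  (forall i, (i < m)%nat -> conv (X i) 0) ->
  conv (fun n => cprod (fun i => qpoch q (X i n) k) m) 1.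
Proof.
  induction m; intros H.
  - simpl. apply conv_const.
  - simpl. apply conv_eq with (RtoC 1 * RtoC 1)%C. ring.
    apply conv_mult. apply IHm. intros; apply H; lia. apply qpoch_conv. apply H; lia.
Qed.

Lemma cprod_upper q (X : nat -> C) k m : 0 < q < 1 ->
  (forall i, (i < m)%nat -> Cmod (X i) <= 1) ->
  Cmod (cprod (fun i => qpoch q (X i) k) m) <= exp (/ (1 - q)) ^ m.
Proof.
  intros hq. induction m; intros H.
  - simpl. rewrite Cmod_1. lra.
  - simpl. rewrite Cmod_mult. rewrite Rmult_comm. apply Rmult_le_compat; try apply Cmod_ge_0.
    apply qpoch_upperE; auto. apply IHm. intros; apply H; lia.
Qed.

Lemma cprod_lower q (X : nat -> C) k m : 0 < q < 1 ->
  (forall i, (i < m)%nat -> Cmod (X i) <= / 2) ->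
  0 < Cmod (cprod (fun i => qpoch q (X i) k) m) /\
  / Cmod (cprod (fun i => qpoch q (X i) k) m) <= exp (/ (1 - q)) ^ m.
Proof.
  intros hq. induction m; intros H.
  - simpl. rewrite Cmod_1, Rinv_1. lra.
  - destruct IHm as [h1 h2]. intros; apply H; lia.
    destruct (qpoch_lowerE q (X m) k) as [h3 h4]; auto.
    simpl. rewrite Cmod_mult, Rinv_mult. split. apply Rmult_lt_0_compat; auto.
    rewrite Rmult_comm. apply Rmult_le_compat; auto; left; apply Rinv_0_lt_compat; auto.
Qed.

Lemma conv_inv (w : nat -> C) W N0 : conv w 1 ->
  (forall n, (N0 <= n)%nat -> 0 < Cmod (w n) /\ / Cmod (w n) <= W) ->
  conv (fun n => Cinv (w n)) 1.
Proof.
  intros H HW. apply eps_conv. intros eps He.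
  destruct (conv_eps w 1 H (eps / (Rabs W + 1))) as [N HN].
  { apply Rdiv_lt_0_compat; auto. assert (0 <= Rabs W) by apply Rabs_pos. lra. }
  exists (max N N0). intros n Hn. specialize (HN n ltac:(lia)). destruct (HW n ltac:(lia)) as [h1 h2].
  assert (hw : w n <> 0). { intros e. rewrite e, Cmod_0 in h1. lra. }
  replace (/ w n - 1)%C with ((- (w n - 1)) * / w n)%C by (field; auto).
  rewrite Cmod_mult, Cmod_opp, Cmod_inv by auto.
  assert (0 <= Rabs W) by apply Rabs_pos.
  assert (W <= Rabs W) by apply Rle_abs.
  assert (0 < / Cmod (w n)) by (apply Rinv_0_lt_compat; auto).
  apply Rle_lt_trans with (Cmod (w n - 1) * (Rabs W + 1)).
  apply Rmult_le_compat_l. apply Cmod_ge_0. lra.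
  apply Rmult_lt_compat_r with (r := Rabs W + 1) in HN. 2: lra.
  replace (eps / (Rabs W + 1) * (Rabs W + 1)) with eps in HN by (field; lra). auto.
Qed.

Lemma ln_neg q : 0 < q < 1 -> ln q < 0.
Proof. intros hq. rewrite <- ln_1. apply ln_increasing; lra. Qed.

Lemma Csub0 x : (x - RtoC 0)%C = x.
Proof. destruct x. unfold Cminus, Cplus, Copp, RtoC. simpl. f_equal; ring. Qed.

Lemma conv_qpow q a (b : C) : 0 < q < 1 -> 0 < a ->
  conv (fun n => qpow q (RtoC (a * INR n) + b)%C) 0.
Proof.
  intros hq ha. unfold conv.
  apply is_lim_seq_ext with (fun n => exp (Re b * ln q) * exp (a * ln q) ^ n).
  - intros n. rewrite Csub0.
    rewrite Cmod_qpow. simpl Re. rewrite <- exp_nat, <- exp_plus. f_equal. unfold Re. ring.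
  - replace (Finite 0) with (Finite (exp (Re b * ln q) * 0)) by (f_equal; ring).
    apply is_lim_seq_mult'. apply is_lim_seq_const. apply is_lim_seq_geom.
    assert (hl := ln_neg q hq).
    rewrite Rabs_pos_eq by (left; apply exp_pos). rewrite <- exp_0. apply exp_increasing. nra.
Qed.

Lemma fin_eventually (P : nat -> nat -> Prop) m :
  (forall i, (i < m)%nat -> exists N, forall n, (N <= n)%nat -> P i n) ->
  exists N, forall i n, (i < m)%nat -> (N <= n)%nat -> P i n.
Proof.
  induction m; intros H.
  - exists O. intros; lia.
  - destruct IHm as [N1 H1]. intros; apply H; lia.
    destruct (H m ltac:(lia)) as [N2 H2]. exists (max N1 N2). intros i n hi hn.
    destruct (Nat.eq_dec i m). subst. apply H2; lia. apply H1; lia.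
Qed.

Definition hterm q r s alpha z k : C :=
  (Cinv (qpoch q (qpow q (RtoC alpha)) k * qpoch q (RtoC q) k) *
   (RtoC (powerRZ (-1) ((1 + Z.of_nat s - Z.of_nat r) * Z.of_nat k)%Z
        * powerRZ q ((1 + Z.of_nat s - Z.of_nat r) * Z.of_nat (binom2 k))%Z) * cpow z k))%C.

Lemma decomp q r s alpha (a : nat -> R) (b : nat -> C) (c : nat -> R) (d : nat -> C) z n k :
  0 < q -> (1 <= r)%nat -> (1 <= s)%nat ->
  phi_term q r s
         (fun i => match i with
                   | O => qpow q (RtoC (- INR n))
                   | S j => qpow q (Cplus (RtoC (a j * INR n)) (b j))
                   end)
         (fun i => match i with
                   | O => qpow q (RtoC alpha)
                   | S l => qpow q (Cplus (RtoC (c l * INR n)) (d l))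
                   end)
         (Cmult (RtoC (q ^ n)) z) k =
  (RtoC (Pn q n k) * cprod (fun i => qpoch q (qpow q (RtoC (a i * INR n) + b i)) k) (r - 1)
   * Cinv (cprod (fun i => qpoch q (qpow q (RtoC (c i * INR n) + d i)) k) (s - 1))
   * hterm q r s alpha z k)%C.
Proof.
  intros hq hr hs. unfold phi_term, hterm.
  destruct r as [|r']; [lia|]. destruct s as [|s']; [lia|].
  replace (S r' - 1)%nat with r' by lia. replace (S s' - 1)%nat with s' by lia.
  rewrite !cprod_shift. rewrite qpow_negn by auto. rewrite cpow_mult, <- (Pn_id q n k hq).
  unfold Cdiv. rewrite !Cinv_mult'. ring.
Qed.

Lemma limit_id q r s alpha z k : 0 < q -> (r <= S s)%nat ->
  limit_term q r s alpha z k = (RtoC (Qp q k) * hterm q r s alpha z k)%C.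
Proof.
  intros hq hrs. unfold limit_term, hterm. rewrite Qp_id.
  set (e := (1 + Z.of_nat s - Z.of_nat r)%Z).
  set (K := Z.of_nat k). set (Bn := Z.of_nat (binom2 k)).
  assert (E1 : ((Z.of_nat r - Z.of_nat s) * K = K + e * K + ((- (e * K)) + (- (e * K))))%Z)
    by (unfold e; ring).
  assert (E2 : ((2 + Z.of_nat s - Z.of_nat r) * Bn = Bn + e * Bn)%Z) by (unfold e; ring).
  rewrite E1, E2.
  assert (hm : -1 <> 0) by lra. assert (hq0 : q <> 0) by lra.
  rewrite !powerRZ_add by auto. rewrite (pm1_sq (- (e * K))).
  unfold K, Bn. rewrite <- !pow_powerRZ.
  unfold Cdiv. rewrite !RtoC_mult. ring.
Qed.

Lemma Rabs_pm1 m : Rabs (powerRZ (-1) m) = 1.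
Proof. assert (h := pm1_sq m). assert (h2 : Rabs (powerRZ (-1) m) * Rabs (powerRZ (-1) m) = 1).
  rewrite <- Rabs_mult, h. apply Rabs_R1. assert (0 <= Rabs (powerRZ (-1) m)) by apply Rabs_pos. nra. Qed.

Lemma hterm_bound q r s alpha z k Ba Bq : 0 < q < 1 -> (r <= S s)%nat ->
  (forall k, / Cmod (qpoch q (qpow q (RtoC alpha)) k) <= Ba) ->
  (forall k, / Cmod (qpoch q (RtoC q) k) <= Bq) ->
  Cmod (hterm q r s alpha z k) <= Ba * Bq * (Cmod z + 1) ^ k.
Proof.
  intros hq hrs HBa HBq. unfold hterm.
  rewrite !Cmod_mult, Cmod_inv', Cmod_mult, Rinv_mult, Cmod_R, Rabs_mult, Rabs_pm1, Cmod_cpow.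
  replace ((1 + Z.of_nat s - Z.of_nat r) * Z.of_nat (binom2 k))%Z
    with (Z.of_nat ((1 + s - r) * binom2 k)) by (rewrite Znat.Nat2Z.inj_mul; f_equal; lia).
  rewrite <- pow_powerRZ. rewrite Rabs_pos_eq by (apply pow_le; lra).
  assert (h1 : q ^ ((1 + s - r) * binom2 k) <= 1) by (apply pow_le1; lra).
  assert (h1' : 0 <= q ^ ((1 + s - r) * binom2 k)) by (apply pow_le; lra).
  assert (h2 : Cmod z ^ k <= (Cmod z + 1) ^ k).
  { apply pow_incr. assert (0 <= Cmod z) by apply Cmod_ge_0. lra. }
  assert (h2' : 0 <= Cmod z ^ k) by (apply pow_le, Cmod_ge_0).
  assert (h3 := HBa k). assert (h4 := HBq k).
  assert (h5 : 0 <= / Cmod (qpoch q (qpow q alpha) k)) by (apply Rinv_nonneg, Cmod_ge_0).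
  assert (h6 : 0 <= / Cmod (qpoch q q k)) by (apply Rinv_nonneg, Cmod_ge_0).
  apply Rmult_le_compat. nra. nra. apply Rmult_le_compat; auto.
  nra.
Qed.

Lemma exM q (zz : R) : 0 < q < 1 -> 0 <= zz -> ex_series (fun k => q ^ binom2 k * (zz + 1) ^ k).
Proof.
  intros hq hz.
  apply ex_series_ext with (fun k => Rabs (q ^ binom2 k * (zz + 1) ^ k)).
  { intros k. apply Rabs_pos_eq. apply Rmult_le_pos; apply pow_le; lra. }
  apply ex_series_DAlembert with 0. lra.
  { intros k. apply Rgt_not_eq, Rmult_lt_0_compat; apply pow_lt; lra. }
  apply is_lim_seq_ext with (fun k => q ^ k * (zz + 1)).
  { intros k. rewrite binom2_S, pow_add. replace ((zz+1)^S k) with ((zz+1)*(zz+1)^k) by (simpl; ring).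
    assert (0 < q ^ binom2 k) by (apply pow_lt; lra).
    assert (0 < (zz + 1) ^ k) by (apply pow_lt; lra).
    assert (0 < q ^ k) by (apply pow_lt; lra).
    rewrite Rabs_pos_eq. field. split; lra.
    apply Rle_mult_inv_pos. apply Rmult_le_pos. left; nra. apply Rmult_le_pos; lra. nra. }
  replace (Finite 0) with (Finite (0 * (zz + 1))) by (f_equal; ring).
  apply is_lim_seq_mult'. apply is_lim_seq_geom. rewrite Rabs_pos_eq; lra. apply is_lim_seq_const.
Qed.

Theorem proposition6 (q : R) (r s : nat) (alpha : R)
  (a : nat -> R) (b : nat -> C) (c : nat -> R) (d : nat -> C) (z : C) :
  0 < q < 1 ->
  (1 <= r)%nat -> (1 <= s)%nat -> (r - 1 <= s)%nat ->
  ~ Zm_ alpha ->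
  (forall j, (j < r - 1)%nat -> 0 < a j) ->
  (forall l, (l < s - 1)%nat -> 0 < c l) ->
  (forall j, (j < r - 1)%nat -> forall n : nat, (1 <= n)%nat ->
       ~ Zm_ (a j * INR n + Re (b j))) ->
  (forall l, (l < s - 1)%nat -> forall n : nat, (1 <= n)%nat ->
       ~ Zm_ (c l * INR n + Re (d l))) ->
  exists L : C,
  is_series (limit_term q r s alpha z) L /\
  filterlim
    (fun n : nat =>
       phi_terminating q r s
         (fun i => match i with
                   | O => qpow q (RtoC (- INR n))
                   | S j => qpow q (Cplus (RtoC (a j * INR n)) (b j))
                   end)
         (fun i => match i with
                   | O => qpow q (RtoC alpha)
                   | S l => qpow q (Cplus (RtoC (c l * INR n)) (d l))
                   end)
         (Cmult (RtoC (q ^ n)) z) n)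
    eventually
    (locally L).
Proof.
  intros hq hr hs hrs _ ha hc _ _.
  set (E := exp (/ (1 - q))).
  assert (hE : 1 <= E). { unfold E. apply Rle_trans with (exp 0). rewrite exp_0; lra. apply exp_le_exp.
    left; apply Rinv_0_lt_compat; lra. }
  destruct (qpoch_inv_bound q (qpow q (RtoC alpha)) hq) as [Ba HBa].
  destruct (qpoch_inv_bound q (RtoC q) hq) as [Bq HBq].
  assert (hBa : 0 <= Ba). { eapply Rle_trans. 2: apply (HBa O). apply Rinv_nonneg, Cmod_ge_0. }
  assert (hBq : 0 <= Bq). { eapply Rle_trans. 2: apply (HBq O). apply Rinv_nonneg, Cmod_ge_0. }
  set (X := fun i n => qpow q (RtoC (a i * INR n) + b i)).
  set (Y := fun i n => qpow q (RtoC (c i * INR n) + d i)).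
  assert (cX : forall i, (i < r - 1)%nat -> conv (X i) 0).
  { intros i hi. apply conv_qpow; auto. }
  assert (cY : forall i, (i < s - 1)%nat -> conv (Y i) 0).
  { intros i hi. apply conv_qpow; auto. }
  destruct (fin_eventually (fun i n => Cmod (X i n) <= / 2) (r - 1)) as [NX HNX].
  { intros i hi. destruct (conv_eps _ _ (cX i hi) (/ 2)) as [N HN]. lra.
    exists N. intros n hn. specialize (HN n hn). rewrite Csub0 in HN. lra. }
  destruct (fin_eventually (fun i n => Cmod (Y i n) <= / 2) (s - 1)) as [NY HNY].
  { intros i hi. destruct (conv_eps _ _ (cY i hi) (/ 2)) as [N HN]. lra.
    exists N. intros n hn. specialize (HN n hn). rewrite Csub0 in HN. lra. }
  set (N0 := max NX NY).
  set (f := fun n k => phi_term q r s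
         (fun i => match i with
                   | O => qpow q (RtoC (- INR n))
                   | S j => qpow q (Cplus (RtoC (a j * INR n)) (b j))
                   end)
         (fun i => match i with
                   | O => qpow q (RtoC alpha)
                   | S l => qpow q (Cplus (RtoC (c l * INR n)) (d l))
                   end)
         (Cmult (RtoC (q ^ n)) z) k).
  set (C0 := E ^ (r - 1) * E ^ (s - 1) * (Ba * Bq)).
  assert (hC0 : 0 <= C0).
  { unfold C0. apply Rmult_le_pos. apply Rmult_le_pos; apply pow_le; lra. nra. }
  set (M := fun k => C0 * (q ^ binom2 k * (Cmod z + 1) ^ k)).
  assert (Hf : forall n k, f n k = (RtoC (Pn q n k) * cprod (fun i => qpoch q (X i n) k) (r - 1)
     * Cinv (cprod (fun i => qpoch q (Y i n) k) (s - 1)) * hterm q r s alpha z k)%C).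
  { intros n k. unfold f. apply decomp; lra || lia. }
  assert (HW : forall k n, (N0 <= n)%nat ->
     0 < Cmod (cprod (fun i => qpoch q (Y i n) k) (s - 1)) /\
     / Cmod (cprod (fun i => qpoch q (Y i n) k) (s - 1)) <= E ^ (s - 1)).
  { intros k n hn. apply cprod_lower; auto. intros i hi. apply HNY; auto. unfold N0 in hn; lia. }
  destruct (tannery f (limit_term q r s alpha z) M N0) as [L [HL1 HL2]].
  - intros k. eapply conv_ext. intros n; symmetry; apply Hf.
    apply conv_eq with (RtoC (Qp q k) * 1 * 1 * hterm q r s alpha z k)%C.
    { rewrite limit_id by (lra || lia). ring. }
    apply conv_mult. apply conv_mult. apply conv_mult.
    apply conv_R, Pn_lim; auto.
    apply cprod_conv; auto.
    apply (conv_inv _ (E ^ (s - 1)) N0). apply cprod_conv; auto. intros n hn. apply HW; auto.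
    apply conv_const.
  - intros n k hn hk. rewrite Hf.
    rewrite !Cmod_mult, Cmod_inv', Cmod_R.
    assert (h1 := Pn_bound q n k hq hk).
    assert (h2 : Cmod (cprod (fun i => qpoch q (X i n) k) (r - 1)) <= E ^ (r - 1)).
    { apply cprod_upper; auto. intros i hi. assert (Cmod (X i n) <= / 2).
      apply HNX; auto. unfold N0 in hn; lia. lra. }
    destruct (HW k n hn) as [_ h3].
    assert (h4 := hterm_bound q r s alpha z k Ba Bq hq ltac:(lia) HBa HBq).
    unfold M, C0.
    assert (0 <= Rabs (Pn q n k)) by apply Rabs_pos.
    assert (0 <= Cmod (cprod (fun i => qpoch q (X i n) k) (r - 1))) by apply Cmod_ge_0.
    assert (0 <= / Cmod (cprod (fun i => qpoch q (Y i n) k) (s - 1))) by (apply Rinv_nonneg, Cmod_ge_0).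
    assert (0 <= Cmod (hterm q r s alpha z k)) by apply Cmod_ge_0.
    replace (E ^ (r - 1) * E ^ (s - 1) * (Ba * Bq) * (q ^ binom2 k * (Cmod z + 1) ^ k))
      with (q ^ binom2 k * E ^ (r - 1) * E ^ (s - 1) * (Ba * Bq * (Cmod z + 1) ^ k)) by ring.
    apply Rmult_le_compat; auto. apply Rmult_le_pos; auto. apply Rmult_le_pos; auto.
    apply Rmult_le_compat; auto. apply Rmult_le_pos; auto.
    apply Rmult_le_compat; auto.
  - unfold M. apply (ex_series_scal_l (V := R_NormedModule) C0). apply exM; auto. apply Cmod_ge_0.
  - exists L. split; auto. apply conv_locally.
    eapply conv_ext. 2: exact HL2. intros n. unfold phi_terminating. rewrite csum_sum_n. reflexivity.
Qed.
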